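(* There exist a precompact TAP group $G$ and a countably compact $G^\star$-regular space $X$ such that $C_p(X,G)$ is not TAP.
   Context: All spaces are Tychonoff and non-empty; topological groups are Hausdorff; $e$ denotes the identity. A topological group is precompact if it is a subgroup of some compact group. $C_p(X,G)$ is the group of all continuous maps $X\to G$ with pointwise operations and the topology of pointwise convergence. $X$ is $G^\star$-regular if there exists $g\in G\setminus\{e\}$ such that for every closed $F\subseteq X$ and every $x\in X\setminus F$ there is $f\in C_p(X,G)$ with $f(x)=g$ and $f(F)\subseteq\{e\}$. A subset $A$ of a topological group $H$ is absolutely productive in $H$ if for every injection $a:\mathbb{N}\to A$ and every map $z:\mathbb{N}\to\mathbb{Z}$ the sequence $\left(\prod_{n=0}^{k}a(n)^{z(n)}\right)_{k\in\mathbb{N}}$ converges in $H$; $H$ is TAP if every absolutely productive subset of $H$ is finite. *)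

(* Defs.v *)
From HB Require Import structures.
From mathcomp Require Import all_boot all_order all_algebra.
From mathcomp Require Import all_classical all_reals all_analysis.
From mathcomp Require Import Rstruct Rstruct_topology.
Set Implicit Arguments. Unset Strict Implicit. Unset Printing Implicit Defensive.
Import Order.TTheory GRing.Theory Num.Theory.
Local Open Scope classical_set_scope.

Record TopGroup := {
  tg_T :> topologicalType;
  tg_mul : tg_T -> tg_T -> tg_T;
  tg_inv : tg_T -> tg_T;
  tg_one : tg_T;
  tg_mulA : forall x y z, tg_mul x (tg_mul y z) = tg_mul (tg_mul x y) z;
  tg_mul1g : forall x, tg_mul tg_one x = x;
  tg_mulVg : forall x, tg_mul (tg_inv x) x = tg_one;
  tg_cont : continuous (fun p : tg_T * tg_T => tg_mul p.1 (tg_inv p.2));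
  tg_hausdorff : hausdorff_space tg_T }.

Definition zpow {H : Type} (mul : H -> H -> H) (inv : H -> H) (one : H)
  (x : H) (z : int) : H :=
  match z with
  | Posz n => iter n (mul x) one
  | Negz n => iter n.+1 (mul (inv x)) one
  end.

Definition partial_prod {H : Type} (mul : H -> H -> H) (inv : H -> H) (one : H)
  (a : nat -> H) (z : nat -> int) (k : nat) : H :=
  foldl (fun acc n => mul acc (zpow mul inv one (a n) (z n))) one (iota 0 k.+1).

(* A is absolutely productive in the subgroup S of the topological group
   (H, mul, inv, one), S carrying the subspace topology: convergence in S
   means convergence in H to a limit lying in S. *)
Definition abs_productive_in {H : topologicalType} (mul : H -> H -> H)
  (inv : H -> H) (one : H) (S : set H) (A : set H) : Prop :=
  forall (a : nat -> H) (z : nat -> int),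
    injective a -> (forall n, A (a n)) ->
    exists2 l : H, S l & partial_prod mul inv one a z @ \oo --> l.

Definition TAP_in {H : topologicalType} (mul : H -> H -> H)
  (inv : H -> H) (one : H) (S : set H) : Prop :=
  forall A : set H, A `<=` S -> abs_productive_in mul inv one S A -> finite_set A.

Definition TAP (G : TopGroup) : Prop :=
  TAP_in (@tg_mul G) (@tg_inv G) (@tg_one G) setT.

(* Precompact: topologically isomorphic to a subgroup of a compact group. *)
Definition precompact_group (G : TopGroup) : Prop :=
  exists (K : TopGroup) (j : G -> K),
    compact [set: K] /\
    injective j /\
    (forall x y, j (tg_mul x y) = tg_mul (j x) (j y)) /\
    continuous j /\
    (forall U : set G, open U -> exists2 V : set K, open V & j @^-1` V = U).

Definition tychonoff_space (X : topologicalType) : Prop :=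
  accessible_space X /\
  forall (B : set X) (x : X), closed B -> ~ B x ->
    exists f : X -> Rdefinitions.R, continuous f /\ f x = 0%R /\ f @` B `<=` [set 1%R].

Definition countably_compact (X : topologicalType) : Prop :=
  forall U : nat -> set X, (forall n, open (U n)) ->
    [set: X] `<=` \bigcup_n U n ->
    exists N : nat, [set: X] `<=` \bigcup_(n in `I_N) U n.

Definition Gstar_regular (G : TopGroup) (X : topologicalType) : Prop :=
  exists2 g : G, g <> tg_one G &
    forall (F : set X) (x : X), closed F -> ~ F x ->
      exists f : X -> G, continuous f /\ f x = g /\ f @` F `<=` [set tg_one G].

(* C_p(X,G): the subgroup of continuous maps inside G^X with the pointwise
   (product) topology and pointwise operations. *)
Definition Cp_TAP (X : topologicalType) (G : TopGroup) : Prop :=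
  @TAP_in {ptws X -> G}
    (fun f g x => tg_mul (f x) (g x))
    (fun f x => tg_inv (f x))
    (fun _ => tg_one G)
    [set f | continuous (f : X -> G)].

(* Main.v *)
Require Import Defs.
From HB Require Import structures.
From mathcomp Require Import all_boot all_order all_algebra.
From mathcomp Require Import all_classical all_reals all_analysis.
From mathcomp Require Import Rstruct Rstruct_topology.
Set Implicit Arguments. Unset Strict Implicit. Unset Printing Implicit Defensive.
Import Order.TTheory GRing.Theory Num.Theory.
Local Open Scope classical_set_scope.

Lemma bool_cvgP (T : Type) (F : set_system T) (FF : Filter F) (g : T -> bool) b :
  g @ F --> b <-> \forall x \near F, g x = b.
Proof.
split.
  move=> h; have : nbhs b [set b] by [].
  by move/h.
move=> h A /= Ab; rewrite nbhs_simpl /=.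
apply: filterS h => x /= gx; rewrite gx; exact: Ab.
Qed.

Section ptws.
Context (I : eqType) (T : topologicalType).
Lemma ptws_cvgP (F : set_system {ptws I -> T}) (FF : Filter F) (f : {ptws I -> T}) :
  F --> f <-> forall i, (fun g : {ptws I -> T} => g i) @ F --> f i.
Proof.
split.
  move=> h i; apply: cvg_trans (@proj_continuous I (fun=> T) i f).
  exact: cvg_app h.
move=> h; apply/cvg_sup => i; apply/cvg_image => //.
  rewrite eqEsubset; split => y //= _; exists (dfwith f i y) => //.
  by rewrite dfwithin.
apply: cvg_trans (h i) => Q /= FQ.
exists ((fun g : {ptws I -> T} => g i) @^-1` Q) => //.
rewrite image_preimage //.
rewrite eqEsubset; split => y //= _; exists (dfwith f i y) => //.
by rewrite dfwithin.
Qed.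
End ptws.

Definition C := cantor_space.
Definition cmul (f g : C) : C := fun i => xorb (f i) (g i).
Definition czero : C := fun _ => false.

Lemma C_cvgP (T : Type) (F : set_system T) (FF : Filter F) (u : T -> C) (f : C) :
  u @ F --> f <-> forall i, \forall x \near F, u x i = f i.
Proof.
rewrite (@ptws_cvgP nat bool (u @ F) _ f); split => h i.
  by apply/(bool_cvgP _ (fun x => u x i)); exact: h.
by apply/(bool_cvgP _ (fun x => u x i)); exact: h.
Qed.

Lemma cont_cmul (Y : topologicalType) (u v : Y -> C) :
  continuous u -> continuous v -> continuous (fun y => cmul (u y) (v y)).
Proof.
move=> cu cv y; apply/C_cvgP => i.
have /C_cvgP/(_ i) hu := cu y.
have /C_cvgP/(_ i) hv := cv y.
by near=> z; rewrite /cmul (near hu z) ?(near hv z).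
Unshelve. all: by end_near.
Qed.

Lemma fst_cont (A B : topologicalType) : continuous (@fst A B).
Proof. by move=> p; exact: cvg_fst. Qed.
Lemma snd_cont (A B : topologicalType) : continuous (@snd A B).
Proof. by move=> p; exact: cvg_snd. Qed.

Lemma cmulA (x y z : C) : cmul x (cmul y z) = cmul (cmul x y) z.
Proof. by apply/funext => i; rewrite /cmul Bool.xorb_assoc_reverse. Qed.
Lemma cmul0 (x : C) : cmul czero x = x.
Proof. by apply/funext => i. Qed.
Lemma cmulV (x : C) : cmul (id x) x = czero.
Proof. by apply/funext => i; rewrite /cmul /czero Bool.xorb_nilpotent. Qed.

Lemma cmul_cont : continuous (fun p : C * C => cmul p.1 (id p.2)).
Proof. exact: cont_cmul (@fst_cont C C) (@snd_cont C C). Qed.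

Definition Kgroup : TopGroup :=
  @Build_TopGroup C cmul id czero cmulA cmul0 cmulV cmul_cont
    cantor_space_hausdorff.

Definition finsupp : set C := [set f | exists M, forall i, (M <= i)%N -> f i = false].

Lemma finsupp_mul (f g : C) : finsupp f -> finsupp g -> finsupp (cmul f g).
Proof.
move=> [M hM] [N hN]; exists (maxn M N) => i hi.
by rewrite /cmul hM ?hN //; [exact: leq_trans (leq_maxr _ _) hi | exact: leq_trans (leq_maxl _ _) hi].
Qed.
Lemma finsupp0 : finsupp czero.
Proof. by exists 0%N. Qed.

Definition Gt := set_type finsupp.
Definition gmul (x y : Gt) : Gt := SigSub (mem_set (finsupp_mul (set_valP x) (set_valP y))).
Definition gone : Gt := SigSub (mem_set finsupp0).

Lemma gval_mul (x y : Gt) : set_val (gmul x y) = cmul (set_val x) (set_val y).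
Proof. by []. Qed.

Lemma gval_inj : injective (@set_val C finsupp).
Proof. by move=> x y; rewrite set_valE; exact: val_inj. Qed.

Lemma gval_cont : continuous (@set_val C finsupp : Gt -> C).
Proof. exact: initial_continuous. Qed.

Lemma gmul_cont : continuous (fun p : Gt * Gt => gmul p.1 (id p.2)).
Proof.
apply: (@continuous_comp_initial _ _ _ (@set_val C finsupp)).
have -> : (set_val \o fun p : Gt * Gt => gmul p.1 (id p.2)) =
   (fun p : Gt * Gt => cmul (set_val p.1) (set_val p.2)) by [].
apply: cont_cmul => p.
  exact: (continuous_comp (@fst_cont Gt Gt p) (@gval_cont p.1)).
exact: (continuous_comp (@snd_cont Gt Gt p) (@gval_cont p.2)).
Qed.

Lemma inj_hausdorff (A B : topologicalType) (j : A -> B) :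
  injective j -> continuous j -> hausdorff_space B -> hausdorff_space A.
Proof.
move=> ij cj hB p q cl; apply: ij; apply: hB => U V /= nU nV.
have := cl (j @^-1` U) (j @^-1` V) (cj _ _ nU) (cj _ _ nV).
by case=> x [Ux Vx]; exists (j x).
Qed.

Lemma gmulA (x y z : Gt) : gmul x (gmul y z) = gmul (gmul x y) z.
Proof. by apply: gval_inj; rewrite !gval_mul cmulA. Qed.
Lemma gmul1 (x : Gt) : gmul gone x = x.
Proof. by apply: gval_inj; rewrite !gval_mul cmul0. Qed.
Lemma gmulV (x : Gt) : gmul (id x) x = gone.
Proof. by apply: gval_inj; rewrite !gval_mul cmulV. Qed.

Definition Ggroup : TopGroup :=
  @Build_TopGroup Gt gmul id gone gmulA gmul1 gmulV gmul_cont
    (inj_hausdorff gval_inj gval_cont cantor_space_hausdorff).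

Lemma G_precompact : precompact_group Ggroup.
Proof.
exists Kgroup, (@set_val C finsupp); split; first exact: cantor_space_compact.
split; first exact: gval_inj.
split; first by [].
split; first exact: gval_cont.
move=> U [V oV <-]; by exists V.
Qed.

Definition zodd (z : int) : bool :=
  match z with Posz n => odd n | Negz n => ~~ odd n end.

Lemma gval_iter (x : Gt) n i :
  set_val (iter n (gmul x) gone) i = set_val x i && odd n.
Proof.
elim: n => [|n IH]; first by rewrite /= andbF.
rewrite iterS gval_mul /cmul IH oddS.
by case: (set_val x i); case: (odd n).
Qed.

Lemma gval_zpow (x : Gt) z i :
  set_val (zpow gmul id gone x z) i = set_val x i && zodd z.
Proof.
case: z => n; first exact: gval_iter.
have -> : zpow gmul id gone x (Negz n) = iter n.+1 (gmul x) gone by [].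
by rewrite gval_iter.
Qed.

Fixpoint pxor (t : nat -> bool) k : bool :=
  match k with 0 => t 0%N | k'.+1 => xorb (pxor t k') (t k'.+1) end.

Lemma partial_prodS {H : Type} (mul : H -> H -> H) inv one a z k :
  partial_prod mul inv one a z k.+1 =
  mul (partial_prod mul inv one a z k) (zpow mul inv one (a k.+1) (z k.+1)).
Proof.
by rewrite /partial_prod -addn1 iotaD foldl_cat /= add0n.
Qed.

Lemma partial_prod0 {H : Type} (mul : H -> H -> H) inv one a z :
  partial_prod mul inv one a z 0 = mul one (zpow mul inv one (a 0%N) (z 0%N)).
Proof. by []. Qed.

Lemma gval_pp (a : nat -> Gt) z i k :
  set_val (partial_prod gmul id gone a z k) i =
  pxor (fun n => set_val (a n) i && zodd (z n)) k.
Proof.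
elim: k => [|k IH].
  by rewrite partial_prod0 gval_mul /cmul (gval_zpow (a 0%N) (z 0%N) i).
by rewrite (partial_prodS gmul id gone a z k) gval_mul /cmul IH (gval_zpow (a k.+1) (z k.+1) i).
Qed.

Lemma pxor_single (t : nat -> bool) m :
  t m -> (forall n, n <> m -> t n = false) -> forall k, pxor t k = (m <= k)%N.
Proof.
move=> tm tn; elim => [|k IH] /=.
  by case: m tm tn => [-> //|m tm tn]; rewrite tn.
rewrite IH; have [e|ne] := eqVneq m k.+1.
  by rewrite -e tm leqnn e ltnn.
rewrite tn; last by move=> e; rewrite e eqxx in ne.
by rewrite Bool.xorb_false_r [in RHS]leq_eqVlt (negbTE ne) ltnS.
Qed.

Lemma inj_seq (T : Type) (A : set T) : infinite_set A ->
  exists a : nat -> T, injective a /\ forall n, A (a n).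
Proof.
move=> /infiniteP/card_leP[f].
exists (fun n => set_val (f (SigSub (mem_set (I : [set: nat] n))))); split.
  move=> m n /= /val_inj /(@inj _ _ _ f) h.
  have := h (mem_set I) (mem_set I).
  by move=> /(congr1 val).
by move=> n; exact: set_valP.
Qed.

Lemma pp_cvg_coord (a : nat -> Gt) z (l : Gt) :
  partial_prod gmul id gone a z @ \oo --> l ->
  forall i, exists N, forall k, (N <= k)%N ->
    pxor (fun n => set_val (a n) i && zodd (z n)) k = set_val l i.
Proof.
move=> h i.
have h' := cvg_comp _ _ h (@gval_cont l).
have /C_cvgP/(_ i) := h'.
case=> N _ hN; exists N => k Nk; rewrite -(gval_pp a z i k); exact: hN.
Qed.

Lemma gfin (x : Gt) : finsupp (set_val x).
Proof. by rewrite set_valE; exact: set_valP. Qed.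

Lemma G_TAP : TAP Ggroup.
Proof.
move=> A _ hA; apply: contrapT => nfin.
have [a [ainj aA]] := inj_seq nfin.
have h z : exists2 l : Gt, setT l & partial_prod gmul id gone a z @ \oo --> l
  := hA a z ainj aA.
have beta i : exists N, forall n, (N < n)%N -> set_val (a n) i = false.
  have [l _ hl] := h (fun _ => Posz 1).
  have [N hN] := pp_cvg_coord hl i.
  exists N => -[//|n] Nn.
  have e1 := hN n Nn.
  have e2 := hN n.+1 (ltnW Nn).
  move: e2 => /=; rewrite e1 andbT.
  by case: (set_val l i); case: (set_val (a n.+1) i).
have mu n : exists M, forall i, (M <= i)%N -> set_val (a n) i = false.
  exact: gfin.
have F2 (MN : nat * nat) : exists ni : nat * nat,
    [/\ (MN.2 <= ni.1)%N, (MN.1 <= ni.2)%N & set_val (a ni.1) ni.2].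
  case: MN => M N /=; apply: contrapT => hneg.
  have hz n i : (N <= n)%N -> (M <= i)%N -> set_val (a n) i = false.
    move=> Nn Mi; apply/negbTE/negP => ani; apply: hneg; by exists (n, i).
  pose hh (j : 'I_(2 ^ M).+1) : {ffun 'I_M -> bool} := [ffun k : 'I_M => set_val (a (N + j)%N) k].
  have hinj : injective hh.
    move=> j1 j2 e; apply: val_inj; apply/eqP; rewrite -(eqn_add2l N); apply/eqP.
    apply: ainj; apply: gval_inj; apply/funext => i.
    have [Mi|iM] := leqP M i.
      by rewrite !hz // leq_addr.
    by have := congr1 (fun f : {ffun 'I_M -> bool} => f (Ordinal iM)) e; rewrite /hh !ffunE /=.
  by have := leq_card hh hinj; rewrite card_ffun card_bool !card_ord ltnn.
have [p hp] := choice F2.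
have [bt hbt] := choice beta.
have [mu' hmu] := choice mu.
pose step (b : nat) :=
  maxn (maxn b (p (b, b)).1.+1)
       (maxn (mu' (p (b, b)).1) (maxn (bt (p (b, b)).2).+1 (p (b, b)).2.+1)).
pose B k := iter k step 0%N.
pose nk k := (p (B k, B k)).1.
pose ik k := (p (B k, B k)).2.
have Bnk k : (B k <= nk k)%N by case: (hp (B k, B k)).
have Bik k : (B k <= ik k)%N by case: (hp (B k, B k)).
have ank k : set_val (a (nk k)) (ik k) by case: (hp (B k, B k)).
have BS k : B k.+1 = step (B k) by [].
have nkB k : (nk k < B k.+1)%N by rewrite BS /step !leq_max leqnn /= ?orbT ?orTb ?orbT.
have muB k : (mu' (nk k) <= B k.+1)%N by rewrite BS /step !leq_max leqnn /= ?orbT ?orTb ?orbT.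
have btB k : (bt (ik k) < B k.+1)%N by rewrite BS /step !leq_max leqnn /= ?orbT ?orTb ?orbT.
have BB k : (B k <= B k.+1)%N by rewrite BS /step !leq_max leqnn /= ?orbT ?orTb ?orbT.
have Bmono j k : (j <= k)%N -> (B j <= B k)%N.
  elim: k => [|k IH]; first by rewrite leqn0 => /eqP ->.
  rewrite leq_eqVlt => /orP[/eqP->//|]; rewrite ltnS => /IH/leq_trans; apply.
  exact: BB.
have Bk k : (k <= B k)%N.
  elim: k => // k IH; exact: leq_ltn_trans IH (leq_ltn_trans (Bnk k) (nkB k)).
have hz j k : j != k -> set_val (a (nk j)) (ik k) = false.
  case: (ltngtP j k) => // jk _.
    apply: hmu.
    exact: leq_trans (muB j) (leq_trans (Bmono _ _ jk) (Bik k)).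
  apply: hbt.
  exact: leq_trans (btB k) (leq_trans (Bmono _ _ jk) (Bnk j)).
pose b n := `[< exists k, nk k = n >].
pose z n : int := Posz (nat_of_bool (b n)).
have [l _ hl] := h z.
have lk k : set_val l (ik k).
  have [N hN] := pp_cvg_coord hl (ik k).
  rewrite -(hN (maxn N (nk k)) (leq_maxl _ _)).
  rewrite (@pxor_single _ (nk k)) ?leq_maxr //.
    rewrite ank /z.
    have -> : b (nk k) by apply/asboolP; exists k.
    done.
  move=> n nnk; rewrite /z.
  case bn: (b n); last by rewrite andbF.
  move/asboolP: bn => [j jn]; rewrite -jn hz ?andFb //.
  by apply/eqP => jk; apply: nnk; rewrite -jn jk.
have [M hM] := gfin l.
by move: (lk M); rewrite hM // (leq_trans (Bk M) (Bik M)).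
Qed.

Definition Xt := option nat.
HB.instance Definition _ := Choice.on Xt.
Definition Xopen (U : set Xt) : Prop :=
  U None -> exists N, forall n, (N <= n)%N -> U (Some n).
Lemma XopT : Xopen setT. Proof. by move=> _; exists 0%N. Qed.
Lemma XopI : setI_closed Xopen.
Proof.
move=> A B hA hB [/hA [N hN] /hB [M hM]]; exists (maxn N M) => n.
by rewrite geq_max => /andP[/hN ? /hM ?].
Qed.
Lemma XopU (I : Type) (f : I -> set Xt) :
  (forall i, Xopen (f i)) -> Xopen (\bigcup_i f i).
Proof.
move=> h [i _ fi]; have [N hN] := h i fi; exists N => n Nn; exists i => //.
exact: hN.
Qed.
HB.instance Definition _ := isOpenTopological.Build Xt XopT XopI XopU.

Lemma XopenE : @open Xt = Xopen.
Proof. by []. Qed.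

Lemma contX_ev (T : topologicalType) (h : Xt -> T) :
  (exists N, forall n, (N <= n)%N -> h (Some n) = h None) -> continuous h.
Proof.
move=> [N hN]; apply/continuousP => A _; rewrite XopenE => hA.
by exists N => n Nn /=; rewrite hN.
Qed.

Lemma contX (T : topologicalType) (h : Xt -> T) :
  (fun n => h (Some n)) @ \oo --> h None -> continuous h.
Proof.
move=> hc; apply/continuousP => A oA; rewrite XopenE => hA.
have : nbhs (h None) A by apply: open_nbhs_nbhs.
by move/hc => [N _ hN]; exists N => n Nn; exact: hN.
Qed.

Lemma Xsep (O : set Xt) (x : Xt) : open O -> O x ->
  exists D : Xt -> bool, [/\ D x, forall y, D y -> O y &
     exists N, forall n, (N <= n)%N -> D (Some n) = D None].
Proof.
rewrite XopenE; case: x => [m|] hO Ox.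
  exists (fun y => y == Some m); split => //.
    by move=> y /eqP ->.
  by exists m.+1 => n mn; apply/eqP => -[e]; move: mn; rewrite e ltnn.
have [N hN] := hO Ox.
exists (fun y => if y is Some n then (N <= n)%N else true); split => //.
  by case => [n /hN|].
by exists N => n ->.
Qed.

Lemma X_countably_compact : countably_compact Xt.
Proof.
move=> U oU cov.
have [k _ Uk] := cov None I.
have [N hN] := (oU k : Xopen (U k)) Uk.
have aux : forall N', exists B, forall m, (m < N')%N -> exists2 j, (j < B)%N & U j (Some m).
  elim => [|N' [B hB]]; first by exists 0%N.
  have [j _ Uj] := cov (Some N') I.
  exists (maxn B j.+1) => m; rewrite ltnS leq_eqVlt => /orP[/eqP ->|/hB [j' j'B Uj']].
    by exists j => //; rewrite leq_max leqnn orbT.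
  by exists j' => //; rewrite leq_max j'B.
have [B hB] := aux N.
exists (maxn B k.+1) => -[m|] _.
  have [Nm|mN] := leqP N m.
    by exists k; [rewrite /= leq_max leqnn orbT | exact: hN].
  by have [j jB Uj] := hB m mN; exists j => //; rewrite /= leq_max jB.
by exists k => //; rewrite /= leq_max leqnn orbT.
Qed.

Lemma X_tychonoff : tychonoff_space Xt.
Proof.
split.
  move=> x y xy; exists [set t | t != y]; split.
  - rewrite XopenE => /= hN; case: y xy hN => [m|] xy hN.
      by exists m.+1 => n mn /=; apply/eqP => -[e]; move: mn; rewrite e ltnn.
    by [].
  - by apply/mem_set.
  - by apply/mem_set => /=; rewrite eqxx.
move=> B x cB Bx.
have [D [Dx DO [N hN]]] := Xsep (closed_openC cB) Bx.
exists (fun y => if D y then 0%R else 1%R); split; [|split].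
- by apply: contX_ev; exists N => n /hN ->.
- by rewrite Dx.
- by move=> _ [y By <-]; case: ifP => // /DO.
Qed.

Definition ce (m : nat) : C := fun i => i == m.
Lemma ce_fin m : finsupp (ce m).
Proof. by exists m.+1 => i mi; apply/eqP => e; move: mi; rewrite e ltnn. Qed.
Definition ge (m : nat) : Gt := SigSub (mem_set (ce_fin m)).
Lemma gval_ge m : set_val (ge m) = ce m. Proof. by []. Qed.
Lemma gval_one : set_val gone = czero. Proof. by []. Qed.

Lemma ge_neq1 m : ge m <> gone.
Proof.
move=> /(congr1 set_val); rewrite gval_ge gval_one => /(congr1 (fun f => f m)).
by rewrite /ce /czero eqxx.
Qed.

Lemma X_Gstar : Gstar_regular Ggroup Xt.
Proof.
exists (ge 0); first exact: ge_neq1.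
move=> F x cF Fx.
have [D [Dx DO [N hN]]] := Xsep (closed_openC cF) Fx.
exists (fun y => if D y then ge 0 else gone); split; [|split].
- by apply: contX_ev; exists N => n /hN ->.
- by rewrite Dx.
- by move=> _ [y Fy <-]; case: ifP => // /DO.
Qed.

Lemma G_cvg (T : Type) (F : set_system T) (FF : Filter F) (u : T -> Gt) (g : Gt) :
  (forall i, \forall x \near F, set_val (u x) i = set_val g i) -> u @ F --> g.
Proof.
move=> h; have hv : ((fun x => set_val (u x)) @ F --> set_val g) by apply/C_cvgP.
move=> U /=; rewrite nbhsE => -[W [oW Wg] WU].
case: oW => V oV eV.
have nV : nbhs (set_val g) V by apply: open_nbhs_nbhs; split => //; rewrite -eV in Wg.
have := hv _ nV; rewrite nbhs_simpl /= => FV.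
by apply: filterS FV => x Vx; apply: WU; rewrite -eV.
Qed.

Lemma pxor_zero (t : nat -> bool) : (forall n, t n = false) -> forall k, pxor t k = false.
Proof. by move=> h; elim => [|k IH] /=; rewrite ?IH h. Qed.

Lemma pxor_atmost1 (t : nat -> bool) n0 :
  (forall n, n != n0 -> t n = false) -> forall k, (n0 <= k)%N -> pxor t k = t n0.
Proof.
move=> h k nk; case tn: (t n0).
  rewrite (@pxor_single _ n0) //; move=> n nn; apply: h; exact/eqP.
apply: pxor_zero => n; have [->//|] := eqVneq n n0; exact: h.
Qed.

Section pt.
Variable X : Type.
Let pmul := (fun (f g : X -> Ggroup) x => @tg_mul Ggroup (f x) (g x)).
Let pinv := (fun (f : X -> Ggroup) x => @tg_inv Ggroup (f x)).
Let pone := (fun _ : X => tg_one Ggroup).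

Lemma iter_pt (f : X -> Ggroup) n x :
  iter n (pmul f) pone x = iter n (gmul (f x)) gone.
Proof. by elim: n => // n IH; rewrite !iterS /pmul IH. Qed.

Lemma zpow_pt (f : X -> Ggroup) z x :
  zpow pmul pinv pone f z x = zpow gmul id gone (f x) z.
Proof. by case: z => n; [exact: iter_pt | exact: (iter_pt (pinv f) n.+1 x)]. Qed.

Lemma pp_pt (a : nat -> (X -> Ggroup)) z k x :
  partial_prod pmul pinv pone a z k x = partial_prod gmul id gone (fun n => a n x) z k.
Proof.
elim: k => [|k IH].
  by rewrite (partial_prod0 pmul pinv pone a z) (partial_prod0 gmul id gone _ z) /pmul zpow_pt.
rewrite (partial_prodS pmul pinv pone a z k) (partial_prodS gmul id gone _ z k).
by rewrite /pmul IH zpow_pt.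
Qed.
End pt.

Definition aseq (n : nat) : {ptws Xt -> Ggroup} :=
  fun x => if x == Some n then ge n else gone.

Lemma aseq_inj : injective aseq.
Proof.
move=> m n e; have := congr1 (fun f : {ptws Xt -> Ggroup} => f (Some n)) e.
rewrite /aseq /= eqxx; case: eqP => [[->]//|_ /esym /ge_neq1 //].
Qed.

Lemma aseq_cont n : continuous (aseq n : Xt -> Ggroup).
Proof.
apply: contX_ev; exists n.+1 => m nm; rewrite /aseq /=.
by case: eqP => // -[e]; move: nm; rewrite e ltnn.
Qed.

Lemma aseq_val n m i :
  set_val (aseq n (Some m) : Gt) i = (m == n) && (i == m).
Proof.
rewrite /aseq; case: eqP => [[->]|ne]; first by rewrite eqxx.
by case: eqP => // e; case: ne; rewrite e.
Qed.

Lemma not_Cp_TAP : ~ Cp_TAP Xt Ggroup.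
Proof.
move=> hT.
have : finite_set (range aseq).
  apply: hT.
    by move=> _ [n _ <-]; exact: aseq_cont.
  move=> a' z a'inj a'A.
  have hex : forall n, exists m, aseq m = a' n.
    by move=> n; have [m _ e] := a'A n; exists m.
  have [s hs] := choice hex.
  have sinj : injective s.
    by move=> m n e; apply: a'inj; rewrite -!hs e.
  pose c m := `[< exists n, s n = m /\ zodd (z n) >].
  pose l : {ptws Xt -> Ggroup} := fun x =>
    if x is Some m then (if c m then ge m else gone) else gone.
  exists l.
    apply: contX; apply: G_cvg => i; exists i.+1 => // m im /=.
    case: (c m) => //; rewrite gval_ge gval_one /ce /czero.
    by rewrite ltn_eqF.
  have key x i : exists N, forall k, (N <= k)%N ->
      set_val (partial_prod (fun (f g : {ptws Xt -> Ggroup}) x => tg_mul (f x) (g x))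
         (fun f x => tg_inv (f x)) (fun _ => tg_one Ggroup) a' z k x : Gt) i
      = set_val (l x : Gt) i.
    have ex k : set_val (partial_prod (fun (f g : {ptws Xt -> Ggroup}) x => tg_mul (f x) (g x))
         (fun f x => tg_inv (f x)) (fun _ => tg_one Ggroup) a' z k x : Gt) i =
        pxor (fun n => set_val (a' n x) i && zodd (z n)) k.
      by rewrite (pp_pt a' z k x) (gval_pp (fun n => a' n x) z i k).
    case: x ex => [m|] ex; last first.
      exists 0%N => k _; rewrite ex pxor_zero // => n.
      by rewrite -hs.
    case hc: (c m).
      have [n0 [sn0 zn0]] : exists n, s n = m /\ zodd (z n) by apply/asboolP.
      exists n0 => k nk; rewrite ex (@pxor_atmost1 _ n0) //.
        by rewrite -hs aseq_val sn0 eqxx zn0 /l hc gval_ge andbT.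
      move=> n nn0; rewrite -hs aseq_val.
      case: eqP => // e; have : s n = s n0 by rewrite sn0.
      by move/sinj => e'; rewrite e' eqxx in nn0.
    exists 0%N => k _; rewrite ex pxor_zero; first by rewrite /l hc.
    move=> n; rewrite -hs aseq_val; case: eqP => //= e.
    case zn: (zodd (z n)); rewrite ?andbF //.
    have : c m by apply/asboolP; exists n.
    by rewrite hc.
  apply/ptws_cvgP => x; apply: G_cvg => i.
  have [N hN] := key x i; exists N => // k Nk; exact: hN.
move=> fin; apply: infinite_nat.
have := finite_preimage (f:=aseq) (B:=range aseq) (fun m n _ _ e => aseq_inj e) fin.
by apply: sub_finite_set => n _; exists n.
Qed.

Theorem theorem6p8 :
  exists G : TopGroup, precompact_group G /\ TAP G /\
    exists X : topologicalType,
      tychonoff_space X /\ (exists x : X, True) /\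
      countably_compact X /\ Gstar_regular G X /\ ~ Cp_TAP X G.
Proof.
exists Ggroup; split; first exact: G_precompact.
split; first exact: G_TAP.
exists Xt; split; first exact: X_tychonoff.
split; first by exists None.
split; first exact: X_countably_compact.
split; first exact: X_Gstar.
exact: not_Cp_TAP.
Qed.
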